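(* Let $\nu\in\mathbb C$ with $q^{2\nu+2i}\ne1$ for all integers $i\ge0$. For integers $m\ge0$ define the polynomial in $1/x$ $$r_{m,\nu}(x;q^2)=\sum_{i=0}^{\lfloor m/2\rfloor}\frac{a_i(\nu,m)}{x^{m-2i}}q^{-i(i+1)},\qquad a_i(\nu,m)=q^{-m(m+\nu)}q^{i(3i+\nu-1)}\frac{(-1)^i(q^{2\nu};q^2)_{m-i}(q^2;q^2)_{m-i}}{(q^2;q^2)_i(q^{2\nu};q^2)_i(q^2;q^2)_{m-2i}}.$$ Then $r_{0,\nu}=1$, $r_{1,\nu}(x;q^2)=q^{-(\nu+1)}(1-q^{2\nu})x^{-1}$, and for all $m\ge1$ and $x\ne0$, $$q^{2m}r_{m+1,\nu}(x;q^2)=q^{-(\nu+1)}\frac{1-q^{2(\nu+m)}}{x}r_{m,\nu}(x;q^2)-q^{-(\nu+2)}r_{m-1,\nu}(x;q^2).$$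
   Context: Fix $0<q<1$; $(a;q)_0=1$, $(a;q)_k=\prod_{i=0}^{k-1}(1-aq^i)$. $\lfloor a\rfloor$ is the largest integer $\le a$. *)

(* Defs.v *)
From Stdlib Require Import Reals.
From Coquelicot Require Import Coquelicot.
Open Scope C_scope.

(* complex power with positive real base: b^w := exp(w * ln b) *)
Definition cpowR (b : R) (w : C) : C :=
  let s := (Re w * ln b)%R in let t := (Im w * ln b)%R in
  (exp s * cos t, exp s * sin t)%R.

Fixpoint qpoch (a b : C) (k : nat) : C :=
  match k with
  | O => 1
  | S k' => qpoch a b k' * (1 - a * b ^ k')
  end.

Definition a_coef (q : R) (nu : C) (m i : nat) : C :=
  let q2 := RtoC (q ^ 2) in
  let q2nu := cpowR q (2 * nu) in
  cpowR q (- (INR m * (INR m + nu)))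
  * cpowR q (INR i * (3 * INR i + nu - 1))
  * ((-1) ^ i * qpoch q2nu q2 (m - i) * qpoch q2 q2 (m - i)
     / (qpoch q2 q2 i * qpoch q2nu q2 i * qpoch q2 q2 (m - 2 * i))).

Definition r_poly (q : R) (m : nat) (nu : C) (x : C) : C :=
  sum_n (fun i => a_coef q nu m i / x ^ (m - 2 * i)
                  * cpowR q (- (INR i * (INR i + 1)))) (Nat.div2 m).

(* Main.v *)
Require Import Defs.
From Stdlib Require Import Reals Lra Lia.
From Coquelicot Require Import Coquelicot.
Open Scope C_scope.

Lemma E_add q w1 w2 : cpowR q (w1 + w2) = cpowR q w1 * cpowR q w2.
Proof.
  destruct w1 as [a b], w2 as [c d]; unfold cpowR; simpl.
  apply injective_projections; simpl;
  rewrite !Rmult_plus_distr_r, exp_plus, ?cos_plus, ?sin_plus; ring.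
Qed.

Lemma E_0 q : cpowR q 0 = 1.
Proof.
  unfold cpowR; simpl. rewrite !Rmult_0_l, exp_0, cos_0, sin_0.
  apply injective_projections; simpl; ring.
Qed.

Lemma E_nz q w : cpowR q w <> 0.
Proof.
  intro H. assert (H1 : cpowR q (w + - w) = 0).
  { rewrite E_add, H. ring. }
  replace (w + - w) with (RtoC 0) in H1 by ring.
  rewrite E_0 in H1. apply C1_nz. exact H1.
Qed.

Lemma E_nat q n : (0 < q)%R -> cpowR q (2 * INR n) = RtoC (q ^ 2) ^ n.
Proof.
  intros hq. unfold cpowR; simpl.
  rewrite <- RtoC_pow.
  replace ((2 * INR n - 0 * 0) * ln q)%R with (INR n * ln (q^2))%R.
  2:{ rewrite ln_pow by lra. simpl INR. ring. }
  replace ((2 * 0 + 0 * INR n) * ln q)%R with 0%R by ring.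
  rewrite cos_0, sin_0, Rmult_1_r, Rmult_0_r.
  change (exp (INR n * ln (q^2))) with (Rpower (q^2) (INR n)).
  rewrite Rpower_pow by (apply pow_lt; lra). reflexivity.
Qed.

Lemma qpoch_nz a b k : (forall i, 1 - a * b ^ i <> 0) -> qpoch a b k <> 0.
Proof. intros H; induction k; simpl. apply C1_nz. apply Cmult_neq_0; auto. Qed.

Lemma qPP_nz q k : (0 < q < 1)%R -> qpoch (RtoC (q^2)) (RtoC (q^2)) k <> 0.
Proof.
  intros hq; apply qpoch_nz; intros i.
  rewrite <- RtoC_pow, <- RtoC_mult, <- RtoC_minus.
  intro H; apply RtoC_inj in H.
  assert (H2 : (0 <= (q^2) ^ (S i) < 1)%R).
  { apply pow_lt_1_compat; [|lia]. split; [nra|]. nra. }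
  rewrite <- tech_pow_Rmult in H2. lra.
Qed.

Lemma qTP_nz q nu k : (0 < q)%R ->
  (forall i : nat, cpowR q (2 * nu + 2 * INR i) <> 1) ->
  qpoch (cpowR q (2 * nu)) (RtoC (q^2)) k <> 0.
Proof.
  intros hq hnu; apply qpoch_nz; intros i.
  rewrite <- E_nat, <- E_add by exact hq.
  intro H; apply (hnu i). rewrite <- (Cplus_0_r (cpowR _ _)), <- H. ring.
Qed.

Definition tt q nu (x : C) m i :=
  a_coef q nu m i / x ^ (m - 2 * i) * cpowR q (- (INR i * (INR i + 1))).

Lemma r_tt q m nu x : r_poly q m nu x = sum_n (tt q nu x m) (Nat.div2 m).
Proof. reflexivity. Qed.

Lemma tt_eq q nu (x : C) m i : tt q nu x m i =
  cpowR q (- (INR m * (INR m + nu)) + INR i * (3 * INR i + nu - 1) + - (INR i * (INR i + 1)))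
  * ((-1) ^ i * qpoch (cpowR q (2 * nu)) (RtoC (q^2)) (m - i) * qpoch (RtoC (q^2)) (RtoC (q^2)) (m - i)
     / (qpoch (RtoC (q^2)) (RtoC (q^2)) i * qpoch (cpowR q (2 * nu)) (RtoC (q^2)) i * qpoch (RtoC (q^2)) (RtoC (q^2)) (m - 2 * i)))
  / x ^ (m - 2 * i).
Proof.
  unfold tt, a_coef. rewrite !E_add. unfold Cdiv. ring.
Qed.

Definition beta nu m i : C :=
  - (INR m * (INR m + nu)) + INR i * (3 * INR i + nu - 1) + - (INR i * (INR i + 1)).
Definition rat q nu m i : C :=
  ((-1) ^ i * qpoch (cpowR q (2 * nu)) (RtoC (q^2)) (m - i) * qpoch (RtoC (q^2)) (RtoC (q^2)) (m - i)
     / (qpoch (RtoC (q^2)) (RtoC (q^2)) i * qpoch (cpowR q (2 * nu)) (RtoC (q^2)) i * qpoch (RtoC (q^2)) (RtoC (q^2)) (m - 2 * i))).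

Lemma tt_eq' q nu (x : C) m i : tt q nu x m i =
  cpowR q (beta nu m i) * rat q nu m i / x ^ (m - 2 * i).
Proof. rewrite tt_eq. reflexivity. Qed.

Lemma E_shift q w1 w2 v1 v2 : w1 + w2 = v1 + v2 ->
  cpowR q w2 = cpowR q v1 * cpowR q v2 / cpowR q w1.
Proof.
  intros H. pose proof (E_nz q w1).
  assert (H1 : cpowR q w1 * cpowR q w2 = cpowR q v1 * cpowR q v2).
  { rewrite <- !E_add, H. reflexivity. }
  rewrite <- H1. field. auto.
Qed.

Ltac expo := apply injective_projections; simpl; ring.

Lemma mult_nz_r (a b : C) : a * b <> 0 -> b <> 0.
Proof. intros H Hb; apply H; rewrite Hb; ring. Qed.

Lemma term_gen q nu (x : C) m j n : (0 < q < 1)%R ->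
  (forall i : nat, cpowR q (2 * nu + 2 * INR i) <> 1) -> x <> 0 ->
  m = (j + j + 2 + n)%nat ->
  cpowR q (2 * INR m) * tt q nu x (m + 1) (S j) =
  cpowR q (- (nu + 1)) * (1 - cpowR q (2 * (nu + INR m))) / x * tt q nu x m (S j)
  - cpowR q (- (nu + 2)) * tt q nu x (m - 1) j.
Proof.
  intros hq hnu hx Hm.
  rewrite !tt_eq'.
  rewrite (E_shift q (- (nu + 1)) (beta nu m (S j)) (beta nu (m+1) (S j)) (2 * INR m)).
  2:{ unfold beta; rewrite Hm, ?plus_INR, ?S_INR; expo. }
  rewrite (E_shift q (- (nu + 2)) (beta nu (m-1) j) (beta nu (m+1) (S j)) (2 * INR m + 2 * INR (S n))).
  2:{ unfold beta; rewrite Hm. replace (j + j + 2 + n - 1)%nat with (S (j + j + n)) by lia.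
      rewrite ?plus_INR, ?S_INR, ?plus_INR; expo. }
  replace (2 * (nu + INR m)) with (2 * nu + 2 * INR m) by ring.
  rewrite !E_add, !E_nat by lra.
  unfold rat.
  replace (m + 1 - S j)%nat with (S (S (j + n))) by lia.
  replace (m - S j)%nat with (S (j + n)) by lia.
  replace (m + 1 - 2 * S j)%nat with (S n) by lia.
  replace (m - 2 * S j)%nat with n by lia.
  replace (m - 1 - j)%nat with (S (j + n)) by lia.
  replace (m - 1 - 2 * j)%nat with (S n) by lia.
  rewrite Hm.
  cbn [qpoch].
  pose proof (qPP_nz q j hq). pose proof (qPP_nz q n hq). pose proof (qPP_nz q (S j) hq).
  pose proof (qPP_nz q (S n) hq). pose proof (qPP_nz q (j+n) hq).
  assert (0 < q)%R by lra.
  pose proof (qTP_nz q nu j H4 hnu). pose proof (qTP_nz q nu (S j) H4 hnu).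
  pose proof (qTP_nz q nu (j+n) H4 hnu).
  cbn [qpoch] in *.
  pose proof (E_nz q (- (nu + 1))). pose proof (E_nz q (- (nu + 2))).
  repeat rewrite ?Cpow_S, ?Cpow_add_r.
  set (T := cpowR q (2 * nu)) in *. set (P := RtoC (q^2)) in *.
  set (B := cpowR q (beta nu (j + j + 2 + n + 1) (S j))).
  field. repeat split; auto; try (apply Cpow_nz; auto);
  first [exact (mult_nz_r _ _ H2) | exact (mult_nz_r _ _ H6) | exact (mult_nz_r _ _ H1)].
Qed.

Lemma term0 q nu (x : C) m : (0 < q < 1)%R ->
  (forall i : nat, cpowR q (2 * nu + 2 * INR i) <> 1) -> x <> 0 ->
  cpowR q (2 * INR m) * tt q nu x (m + 1) 0 =
  cpowR q (- (nu + 1)) * (1 - cpowR q (2 * (nu + INR m))) / x * tt q nu x m 0.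
Proof.
  intros hq hnu hx.
  rewrite !tt_eq'.
  rewrite (E_shift q (- (nu + 1)) (beta nu m 0) (beta nu (m+1) 0) (2 * INR m)).
  2:{ unfold beta; rewrite ?plus_INR, ?S_INR; expo. }
  replace (2 * (nu + INR m)) with (2 * nu + 2 * INR m) by ring.
  rewrite !E_add, !E_nat by lra.
  unfold rat. rewrite !Nat.mul_0_r, !Nat.sub_0_r, Nat.add_1_r.
  cbn [qpoch].
  pose proof (qPP_nz q m hq).
  assert (0 < q)%R by lra.
  pose proof (qTP_nz q nu m H0 hnu).
  pose proof (qPP_nz q (S m) hq) as HS. cbn [qpoch] in HS.
  pose proof (E_nz q (- (nu + 1))).
  set (T := cpowR q (2 * nu)) in *. set (P := RtoC (q^2)) in *.
  rewrite !Cpow_S. field. repeat split; auto; try (apply Cpow_nz; auto); exact (mult_nz_r _ _ HS).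
Qed.

Lemma term_sp q nu (x : C) m k : (0 < q < 1)%R ->
  (forall i : nat, cpowR q (2 * nu + 2 * INR i) <> 1) -> x <> 0 ->
  m = (k + k + 1)%nat ->
  cpowR q (2 * INR m) * tt q nu x (m + 1) (S k) =
  - (cpowR q (- (nu + 2)) * tt q nu x (m - 1) k).
Proof.
  intros hq hnu hx Hm.
  rewrite !tt_eq'.
  rewrite (E_shift q (- (nu + 2)) (beta nu (m-1) k) (beta nu (m+1) (S k)) (2 * INR m)).
  2:{ unfold beta; rewrite Hm. replace (k + k + 1 - 1)%nat with (k + k)%nat by lia.
      rewrite ?plus_INR, ?S_INR, ?plus_INR; expo. }
  unfold rat.
  replace (m + 1 - S k)%nat with (S k) by lia.
  replace (m + 1 - 2 * S k)%nat with 0%nat by lia.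
  replace (m - 1 - k)%nat with k by lia.
  replace (m - 1 - 2 * k)%nat with 0%nat by lia.
  cbn [qpoch].
  pose proof (qPP_nz q k hq). pose proof (qPP_nz q (S k) hq).
  assert (0 < q)%R by lra.
  pose proof (qTP_nz q nu k H1 hnu). pose proof (qTP_nz q nu (S k) H1 hnu).
  pose proof (E_nz q (- (nu + 2))).
  cbn [qpoch] in *.
  set (T := cpowR q (2 * nu)) in *. set (P := RtoC (q^2)) in *.
  repeat rewrite ?Cpow_S.
  field. repeat split; auto; try (apply Cpow_nz; auto);
  first [exact (mult_nz_r _ _ H0) | exact (mult_nz_r _ _ H3)].
Qed.

Lemma sum_S' (a : nat -> C) n : sum_n a (S n) = sum_n a n + a (S n).
Proof. rewrite sum_Sn. reflexivity. Qed.

Lemma sum_O' (a : nat -> C) : sum_n a 0 = a 0%nat.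
Proof. rewrite sum_O. reflexivity. Qed.

Lemma sum_lin (f g h : nat -> C) c0 c d n :
  (forall i, (i <= n)%nat -> c0 * f i = c * g i - d * h i) ->
  c0 * sum_n f n = c * sum_n g n - d * sum_n h n.
Proof.
  induction n; intros H.
  - rewrite !sum_O'. apply H. lia.
  - rewrite !sum_S'. rewrite Cmult_plus_distr_l, IHn by (intros; apply H; lia).
    rewrite H by lia. ring.
Qed.

Definition hsh (h : nat -> C) i := match i with 0%nat => RtoC 0 | S i' => h i' end.

Lemma sum_shift (h : nat -> C) n : sum_n (hsh h) (S n) = sum_n h n.
Proof.
  induction n.
  - rewrite sum_S', !sum_O'. simpl. ring.
  - rewrite sum_S', IHn, (sum_S' h). reflexivity.
Qed.

Theorem mainTheorem18 (q : R) (nu : C) :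
  (0 < q < 1)%R ->
  (forall i : nat, cpowR q (2 * nu + 2 * INR i) <> 1) ->
  (forall x : C, r_poly q 0 nu x = 1) /\
  (forall x : C, x <> 0 ->
     r_poly q 1 nu x = cpowR q (- (nu + 1)) * (1 - cpowR q (2 * nu)) / x) /\
  (forall (m : nat) (x : C), (1 <= m)%nat -> x <> 0 ->
     cpowR q (2 * INR m) * r_poly q (m + 1) nu x =
       cpowR q (- (nu + 1)) * (1 - cpowR q (2 * (nu + INR m))) / x * r_poly q m nu x
       - cpowR q (- (nu + 2)) * r_poly q (m - 1) nu x).
Proof.
  intros hq hnu. split; [|split].
  - intros x. unfold r_poly. simpl Nat.div2. rewrite sum_O'. unfold a_coef.
    simpl. replace (- (0 * (0 + nu))) with (RtoC 0) by (apply injective_projections; simpl; ring).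
    replace (0 * (3 * 0 + nu - 1)) with (RtoC 0) by (apply injective_projections; simpl; ring).
    replace (- (0 * (0 + 1))) with (RtoC 0) by (apply injective_projections; simpl; ring).
    rewrite !E_0. field.
  - intros x hx. unfold r_poly. simpl Nat.div2. rewrite sum_O'. unfold a_coef.
    cbn [Nat.sub Nat.mul Nat.add INR qpoch Cpow]. replace (- (1 * (1 + nu))) with (- (nu + 1)) by (apply injective_projections; simpl; ring).
    replace (0 * (3 * 0 + nu - 1)) with (RtoC 0) by (apply injective_projections; simpl; ring).
    replace (- (0 * (0 + 1))) with (RtoC 0) by (apply injective_projections; simpl; ring).
    rewrite !E_0. pose proof (qPP_nz q 1 hq) as H1. cbn [qpoch Cpow] in H1.
    rewrite Cmult_1_r, Cmult_1_l in H1. field. repeat split; auto.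
  - intros m x Hm hx. rewrite !r_tt.
    destruct (Nat.Even_or_Odd m) as [[k Hk]|[k Hk]].
    + destruct k as [|k']; [lia|].
      assert (E1 : Nat.div2 (m+1) = S k') by (replace (m+1)%nat with (S (2 * S k')) by lia; apply Nat.div2_succ_double).
      assert (E2 : Nat.div2 m = S k') by (rewrite Hk; apply Nat.div2_double).
      assert (E3 : Nat.div2 (m-1) = k') by (replace (m-1)%nat with (S (2 * k')) by lia; apply Nat.div2_succ_double).
      rewrite E1, E2, E3.
      rewrite <- (sum_shift (tt q nu x (m-1)) k').
      apply sum_lin. intros [|j] Hj.
      * simpl hsh. rewrite term0 by auto. ring.
      * simpl hsh. apply (term_gen q nu x m j (m - 2 * S j)); auto. lia.
    + assert (E1 : Nat.div2 (m+1) = S k) by (replace (m+1)%nat with (2 * S k)%nat by lia; apply Nat.div2_double).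
      assert (E2 : Nat.div2 m = k) by (rewrite Hk, Nat.add_1_r; apply Nat.div2_succ_double).
      assert (E3 : Nat.div2 (m-1) = k) by (replace (m-1)%nat with (2 * k)%nat by lia; apply Nat.div2_double).
      rewrite E1, E2, E3.
      rewrite <- (sum_shift (tt q nu x (m-1)) k), sum_S'.
      rewrite sum_S', Cmult_plus_distr_l.
      rewrite (sum_lin (tt q nu x (m+1)) (tt q nu x m) (hsh (tt q nu x (m-1)))
                 (cpowR q (2 * INR m)) (cpowR q (- (nu + 1)) * (1 - cpowR q (2 * (nu + INR m))) / x)
                 (cpowR q (- (nu + 2))) k).
      * simpl hsh. rewrite (term_sp q nu x m k) by (auto; lia). ring.
      * intros [|j] Hj.
        -- simpl hsh. rewrite term0 by auto. ring.
        -- simpl hsh. apply (term_gen q nu x m j (m - 2 * S j)); auto. lia.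
Qed.
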